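(* Let $f$ be a regular planar discrete curve and $\mathfrak{q}\ne 0$ a space form vector with $\mathfrak{q}\perp\mathfrak{p}$, determining the space form $\mathcal{Q}$. The following are equivalent: (i) $f$ has constant arc-length in $\mathcal{Q}$; (ii) $\mathfrak{f}_i\langle\mathfrak{f}_k,\mathfrak{f}_j\rangle-\mathfrak{f}_k\langle\mathfrak{f}_i,\mathfrak{f}_j\rangle\perp\mathfrak{q}$ for all consecutive vertices $i,j,k$; (iii) the quantity $\frac{\langle\mathfrak{f}_i,\mathfrak{f}_j\rangle}{\langle\mathfrak{f}_i,\mathfrak{q}\rangle\langle\mathfrak{f}_j,\mathfrak{q}\rangle}$ is the same constant $\chi\in\mathbb{R}$ for all edges $(ij)$; (iv) there exists a circle congruence $a\in\mathcal{P}^\pm$ with $\mathfrak{a}_j\in\mathrm{span}\{\mathfrak{f}_j,\mathfrak{q},\mathfrak{p}\}$ for all $j$.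
   Context: Planar light cone model: $\mathbb{R}^{3,2}$ with form of signature $(3,2)$, light cone $\mathcal{L}$; fixed $\mathfrak{p}$ with $\langle\mathfrak{p},\mathfrak{p}\rangle=-1$; $v$ with $\langle\mathfrak{v},\mathfrak{p}\rangle=0$ are points of $\mathbb{R}^2\cup\{\infty\}$, others oriented circles/lines; incidence = orthogonality. A space form vector $\mathfrak{q}\perp\mathfrak{p}$ determines a space form $\mathcal{Q}$ of constant curvature $-\langle\mathfrak{q},\mathfrak{q}\rangle$ (Euclidean if $\langle\mathfrak{q},\mathfrak{q}\rangle=0$, hyperbolic if $>0$ with boundary given by $\mathfrak{q}\pm\sqrt{\langle\mathfrak{q},\mathfrak{q}\rangle}\mathfrak{p}$, spherical if $<0$); its isometries are compositions of M-inversions (inversions $x\mapsto x-\frac{2\langle x,\mathfrak{a}\rangle}{\langle\mathfrak{a},\mathfrak{a}\rangle}\mathfrak{a}$ with $\mathfrak{a}\perp\mathfrak{p}$) fixing $\mathfrak{q}$. A discrete curve $f$ (map from consecutive integers to points) has constant arc-length in $\mathcal{Q}$ if the $\mathcal{Q}$-distance between consecutive points is constant. It is regular if any three consecutive points are pairwise distinct, in the hyperbolic case all points lie on the same side of the boundary, and in the spherical case consecutive points are not antipodal. $\mathcal{P}^\pm_j:=\{\mathfrak{f}_{j-1},\mathfrak{f}_{j+1}\}^\perp\cap\mathcal{L}$ (circles through $f_{j-1},f_{j+1}$); a circle congruence $a\in\mathcal{P}^\pm$ chooses $a_j$ in this pencil at each vertex. *)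

(* Defs.v *)
From Stdlib Require Import Reals ZArith.
Open Scope R_scope.

(* R^{3,2}: vectors of R^5 with the form x0y0+x1y1+x2y2-x3y3-x4y4 (signature (3,2)). *)
Record V := mkV { v0 : R; v1 : R; v2 : R; v3 : R; v4 : R }.

Definition ip (x y : V) : R :=
  v0 x * v0 y + v1 x * v1 y + v2 x * v2 y - v3 x * v3 y - v4 x * v4 y.

Definition vzero : V := mkV 0 0 0 0 0.
Definition vadd (x y : V) : V :=
  mkV (v0 x + v0 y) (v1 x + v1 y) (v2 x + v2 y) (v3 x + v3 y) (v4 x + v4 y).
Definition vscal (a : R) (x : V) : V :=
  mkV (a * v0 x) (a * v1 x) (a * v2 x) (a * v3 x) (a * v4 x).

Definition lightlike (x : V) : Prop := ip x x = 0.

(* homogeneous coordinates of a point of R^2 ∪ {∞} (w.r.t. the fixed vector p) *)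
Definition is_point (p x : V) : Prop := lightlike x /\ x <> vzero /\ ip x p = 0.

Definition same_point (x y : V) : Prop := exists l : R, l <> 0 /\ x = vscal l y.

Definition Zinterval (dom : Z -> Prop) : Prop :=
  forall a b c : Z, dom a -> dom b -> (a <= c <= b)%Z -> dom c.

Definition discrete_curve (p : V) (dom : Z -> Prop) (f : Z -> V) : Prop :=
  Zinterval dom /\ forall j, dom j -> is_point p (f j).

(* curvature of the space form Q determined by q *)
Definition curv (q : V) : R := - ip q q.

(* <x,y> after normalising x, y to <x,q> = <y,q> = -1 *)
Definition qratio (q x y : V) : R := ip x y / (ip x q * ip y q).

Definition acosh (x : R) : R := ln (x + sqrt (x * x - 1)).

(* distance in the space form Q between (the points represented by) x and y:
   Euclidean  : sqrt(-2<x,y>)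
   spherical  : arccos(1 + K <x,y>) / sqrt K           (K > 0)
   hyperbolic : arccosh(1 + K <x,y>) / sqrt (-K)       (K < 0)
   with x,y normalised by <x,q> = <y,q> = -1 and K = -<q,q>. *)
Definition distQ (q x y : V) : R :=
  let K := curv q in
  let c := qratio q x y in
  if Rlt_dec 0 K then acos (1 + K * c) / sqrt K
  else if Rlt_dec K 0 then acosh (1 + K * c) / sqrt (- K)
  else sqrt (-2 * c).

Definition constant_arclength (q : V) (dom : Z -> Prop) (f : Z -> V) : Prop :=
  exists c : R, forall j, dom j -> dom (j + 1)%Z -> distQ q (f j) (f (j + 1)%Z) = c.

(* hyperbolic case: x and y lie on the same side of the boundary circle
   (given by q ± sqrt<q,q> p, i.e. <x,q> = 0); the sign of <x,q> is compared for
   lifts in the same nappe of the light cone of p^⊥ (signature (3,1)), the nappe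
   being detected by the sign of <x,t> for any timelike t ⊥ p. *)
Definition same_side (p q x y : V) : Prop :=
  forall t : V, ip t p = 0 -> ip t t < 0 ->
    0 < (ip x t * ip y t) * (ip x q * ip y q).

(* spherical case: the normalised vectors -x/<x,q>, -y/<y,q> have antipodal
   projections onto q^⊥ (the projection of n is n - q / K). *)
Definition antipodal (q x y : V) : Prop :=
  let K := curv q in
  vadd (vscal (- / ip x q) x) (vscal (- / K) q)
  = vscal (-1) (vadd (vscal (- / ip y q) y) (vscal (- / K) q)).

Definition regular (p q : V) (dom : Z -> Prop) (f : Z -> V) : Prop :=
  (forall i, dom i -> dom (i + 1)%Z -> dom (i + 2)%Z ->
     ~ same_point (f i) (f (i + 1)%Z) /\ ~ same_point (f (i + 1)%Z) (f (i + 2)%Z)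
     /\ ~ same_point (f i) (f (i + 2)%Z)) /\
  (0 < ip q q -> forall i j, dom i -> dom j -> same_side p q (f i) (f j)) /\
  (ip q q < 0 -> forall i, dom i -> dom (i + 1)%Z -> ~ antipodal q (f i) (f (i + 1)%Z)).

(* Main.v *)
Require Import Defs.
From Stdlib Require Import Reals ZArith Lra Lia Psatz Classical.
Open Scope R_scope.

Lemma ip_sym x y : ip x y = ip y x. Proof. unfold ip; ring. Qed.
Lemma ip_addl x y z : ip (vadd x y) z = ip x z + ip y z.
Proof. unfold ip, vadd; simpl; ring. Qed.
Lemma ip_addr x y z : ip z (vadd x y) = ip z x + ip z y.
Proof. unfold ip, vadd; simpl; ring. Qed.
Lemma ip_scall a x y : ip (vscal a x) y = a * ip x y.
Proof. unfold ip, vscal; simpl; ring. Qed.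
Lemma ip_scalr a x y : ip y (vscal a x) = a * ip y x.
Proof. unfold ip, vscal; simpl; ring. Qed.

Ltac norm := repeat (rewrite ?ip_addl, ?ip_addr, ?ip_scall, ?ip_scalr).
Ltac normin H := repeat (rewrite ?ip_addl, ?ip_addr, ?ip_scall, ?ip_scalr in H).

Lemma kernel3 x1 x2 x3 y1 y2 y3 : exists a b c, ~(a = 0 /\ b = 0 /\ c = 0) /\
  a*x1+b*x2+c*x3 = 0 /\ a*y1+b*y2+c*y3 = 0.
Proof.
  destruct (classic (x2*y3 - x3*y2 = 0 /\ x3*y1 - x1*y3 = 0 /\ x1*y2 - x2*y1 = 0))
    as [[C1 [C2 C3]]|Hc].
  - destruct (Req_dec x1 0) as [E1|E1].
    + destruct (Req_dec x2 0) as [E2|E2].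
      * destruct (Req_dec x3 0) as [E3|E3].
        -- subst. destruct (Req_dec y1 0) as [F1|F1].
           ++ subst. destruct (Req_dec y2 0) as [F2|F2].
              ** subst. destruct (Req_dec y3 0) as [F3|F3].
                 --- subst. exists 1, 0, 0. split; [lra|split; ring].
                 --- exists 0, 1, 0. split; [lra|split; ring].
              ** exists 0, y3, (-y2). split; [lra|split; ring].
           ++ exists (-y3), 0, y1. split; [lra|split; ring].
        -- exists 0, x3, (-x2). split; [lra|split; nra].
      * exists 0, x3, (-x2). split; [lra|split; nra].
    + exists (-x3), 0, x1. split; [lra|split; nra].
  - exists (x2*y3 - x3*y2), (x3*y1 - x1*y3), (x1*y2 - x2*y1).
    split; [tauto|split; ring].
Qed.

Lemma sq_pos a : a <> 0 -> 0 < a * a.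
Proof. intro. nra. Qed.

Lemma negidx (p t u : V) : ip p p < 0 -> ip t t < 0 -> ip p t = 0 ->
  ip u p = 0 -> ip u t = 0 -> 0 <= ip u u.
Proof.
  intros Hp Ht Hpt Hup Hut.
  destruct (Rle_lt_dec 0 (ip u u)) as [|Hu]; [assumption|exfalso].
  destruct (kernel3 (v3 p) (v3 t) (v3 u) (v4 p) (v4 t) (v4 u)) as [a [b [c [Hn [K3 K4]]]]].
  set (w := vadd (vscal a p) (vadd (vscal b t) (vscal c u))).
  assert (E1 : ip w w = a*a*ip p p + b*b*ip t t + c*c*ip u u).
  { unfold w. norm. rewrite (ip_sym t p), (ip_sym p u), (ip_sym t u), Hpt, Hup, Hut. ring. }
  assert (E2 : ip w w = v0 w * v0 w + v1 w * v1 w + v2 w * v2 w).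
  { unfold ip. assert (v3 w = 0) as -> by (unfold w; simpl; lra).
    assert (v4 w = 0) as -> by (unfold w; simpl; lra). ring. }
  assert (0 <= ip w w) by (rewrite E2; nra).
  assert (ip w w < 0).
  { rewrite E1.
    destruct (Req_dec a 0) as [Ha|Ha].
    - destruct (Req_dec b 0) as [Hb|Hb].
      + assert (c <> 0) by tauto. subst. pose proof (sq_pos c H0). nra.
      + pose proof (sq_pos b Hb). nra.
    - pose proof (sq_pos a Ha). nra. }
  lra.
Qed.

Lemma bounds_norm p q a b : ip p p = -1 -> ip q p = 0 -> ip a a = 0 -> ip b b = 0 ->
  ip a p = 0 -> ip b p = 0 -> ip a q = -1 -> ip b q = -1 ->
  (0 < ip q q -> forall t, ip t p = 0 -> ip t t < 0 -> 0 < ip a t * ip b t) ->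
  ip a b <= 0 /\ (ip q q < 0 -> ip q q * ip a b <= 2).
Proof.
  intros Hp Hqp Haa Hbb Hap Hbp Haq Hbq Hs.
  assert (Hpq : ip p q = 0) by (rewrite ip_sym; auto).
  assert (Hpa : ip p a = 0) by (rewrite ip_sym; auto).
  assert (Hpb : ip p b = 0) by (rewrite ip_sym; auto).
  assert (Hqa : ip q a = -1) by (rewrite ip_sym; auto).
  assert (Hqb : ip q b = -1) by (rewrite ip_sym; auto).
  assert (Hba : ip b a = ip a b) by (apply ip_sym).
  split.
  - destruct (Rtotal_order (ip q q) 0) as [Qn|[Q0|Qp]].
    + assert (H := negidx p q (vadd b (vscal (-1) a))).
      normin H. rewrite ?Hp, ?Hpq, ?Haa, ?Hbb, ?Hap, ?Hbp, ?Haq, ?Hbq, ?Hba, ?Hpa, ?Hqa, ?Hqb in H. lra.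
    + assert (H := negidx p (vadd a q) (vadd b (vadd (vscal (-1) a) (vscal (ip a b) q)))).
      normin H. rewrite ?Hp, ?Hpq, ?Haa, ?Hbb, ?Hap, ?Hbp, ?Haq, ?Hbq, ?Hba, ?Hpa, ?Hqa, ?Hqb, ?Q0, ?Hqp in H.
      lra.
    + destruct (Rle_lt_dec (ip a b) 0) as [|Hc]; [assumption|exfalso].
      assert (H := Hs Qp (vadd a (vscal (-1) b))).
      normin H. rewrite Haa, Hbb, Hap, Hbp, Hba in H. nra.
  - intro Qn.
    assert (H := negidx p q (vadd b (vadd a (vscal (2 / ip q q) q)))).
    normin H. rewrite Hp, Hpq, Haa, Hbb, Hap, Hbp, Haq, Hbq, Hba, Hqa, Hqb, Hqp in H.
    set (c := ip a b) in *. set (Q := ip q q) in *.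
    assert (H' : 0 <= 2 * c - 4 / Q).
    { replace (2 * c - 4 / Q) with
        (0 + (c + 2 / Q * -1) + (c + (0 + 2 / Q * -1) + (2 / Q * -1 + (2 / Q * -1 + 2 / Q * (2 / Q * Q))))) by (field; lra).
      apply H; try lra. field; lra. }
    assert (Q * (2 * c - 4 / Q) = 2 * Q * c - 4) by (field; lra).
    nra.
Qed.

Lemma bounds p q x y : ip p p = -1 -> ip q p = 0 -> ip x x = 0 -> ip y y = 0 ->
  ip x p = 0 -> ip y p = 0 -> ip x q <> 0 -> ip y q <> 0 ->
  (0 < ip q q -> same_side p q x y) ->
  qratio q x y <= 0 /\ (ip q q < 0 -> ip q q * qratio q x y <= 2).
Proof.
  intros Hp Hqp Hxx Hyy Hxp Hyp HX HY Hs.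
  assert (Eq : qratio q x y = ip (vscal (- / ip x q) x) (vscal (- / ip y q) y)).
  { unfold qratio. rewrite ip_scall, ip_scalr. field. auto. }
  rewrite Eq.
  apply (bounds_norm p); auto.
  - rewrite ip_scall, ip_scalr, Hxx; ring.
  - rewrite ip_scall, ip_scalr, Hyy; ring.
  - rewrite ip_scall, Hxp; ring.
  - rewrite ip_scall, Hyp; ring.
  - rewrite ip_scall; field; auto.
  - rewrite ip_scall; field; auto.
  - intros Qp t Htp Htt. specialize (Hs Qp t Htp Htt).
    rewrite !ip_scall.
    replace (- / ip x q * ip x t * (- / ip y q * ip y t)) with
      ((ip x t * ip y t * (ip x q * ip y q)) / ((ip x q * ip y q) * (ip x q * ip y q))) by (field; auto).
    apply Rdiv_lt_0_compat; auto.
    apply sq_pos. apply Rmult_integral_contrapositive; auto.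
Qed.

Definition gK (K c : R) : R :=
  if Rlt_dec 0 K then acos (1 + K * c) / sqrt K
  else if Rlt_dec K 0 then acosh (1 + K * c) / sqrt (- K)
  else sqrt (-2 * c).

Lemma distQ_gK q x y : distQ q x y = gK (curv q) (qratio q x y).
Proof. reflexivity. Qed.

Lemma acosh_prop y : 1 <= y -> 0 < y + sqrt (y * y - 1) /\
  (y + sqrt (y * y - 1)) * (2 * y - (y + sqrt (y * y - 1))) = 1.
Proof.
  intro Hy. pose proof (sqrt_pos (y*y-1)).
  assert (sqrt (y*y-1) * sqrt (y*y-1) = y*y-1) by (apply sqrt_sqrt; nra).
  split; nra.
Qed.

Lemma gK_inj K c1 c2 : c1 <= 0 -> c2 <= 0 -> (0 < K -> -2 <= K * c1) ->
  (0 < K -> -2 <= K * c2) -> gK K c1 = gK K c2 -> c1 = c2.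
Proof.
  intros H1 H2 B1 B2. unfold gK.
  destruct (Rlt_dec 0 K) as [Kp|Kn].
  - intro H. unfold Rdiv in H. apply Rmult_eq_reg_r in H.
    2: { apply Rinv_neq_0_compat. pose proof (sqrt_lt_R0 K Kp). lra. }
    specialize (B1 Kp). specialize (B2 Kp).
    assert (E : 1 + K * c1 = 1 + K * c2).
    { rewrite <- (cos_acos (1 + K * c1)), <- (cos_acos (1 + K * c2)), H; auto; split; nra. }
    apply (Rmult_eq_reg_l K); lra.
  - destruct (Rlt_dec K 0) as [Kn'|Kz].
    + intro H. unfold Rdiv in H. apply Rmult_eq_reg_r in H.
      2: { apply Rinv_neq_0_compat. assert (0 < -K) by lra. pose proof (sqrt_lt_R0 (-K) H0). lra. }
      unfold acosh in H.
      assert (A1 : 1 <= 1 + K * c1) by nra.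
      assert (A2 : 1 <= 1 + K * c2) by nra.
      destruct (acosh_prop _ A1) as [P1 Q1].
      destruct (acosh_prop _ A2) as [P2 Q2].
      assert (G : 1 + K * c1 + sqrt ((1 + K * c1) * (1 + K * c1) - 1) =
                  1 + K * c2 + sqrt ((1 + K * c2) * (1 + K * c2) - 1)).
      { rewrite <- (exp_ln _ P1), <- (exp_ln _ P2), H. reflexivity. }
      rewrite G in Q1.
      assert (E : 2 * (1 + K * c1) = 2 * (1 + K * c2)).
      { set (g := 1 + K * c2 + sqrt ((1 + K * c2) * (1 + K * c2) - 1)) in *.
        assert (g * (2 * (1 + K * c1) - g) = g * (2 * (1 + K * c2) - g)) by lra.
        apply Rmult_eq_reg_l in H0; lra. }
      apply (Rmult_eq_reg_l K); lra.
    + intro H. apply sqrt_inj in H; lra.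
Qed.

Lemma chain (dom : Z -> Prop) (c : Z -> R) : Zinterval dom ->
  (forall i, dom i -> dom (i+1)%Z -> dom (i+2)%Z -> c i = c (i+1)%Z) ->
  forall i j, dom i -> dom (i+1)%Z -> dom j -> dom (j+1)%Z -> c i = c j.
Proof.
  intros Hint Hc.
  assert (Hn : forall n : nat, forall i, dom i -> dom (i + Z.of_nat n + 1)%Z ->
            c i = c (i + Z.of_nat n)%Z).
  { induction n as [|n IH]; intros i Hi Hin.
    - simpl. rewrite Z.add_0_r. reflexivity.
    - rewrite Nat2Z.inj_succ in *.
      assert (D1 : dom (i + Z.of_nat n + 1)%Z) by (apply (Hint i (i + Z.succ (Z.of_nat n) + 1)%Z); auto; lia).
      assert (D0 : dom (i + Z.of_nat n)%Z) by (apply (Hint i (i + Z.succ (Z.of_nat n) + 1)%Z); auto; lia).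
      assert (D2 : dom (i + Z.of_nat n + 2)%Z) by (replace (i + Z.of_nat n + 2)%Z with (i + Z.succ (Z.of_nat n) + 1)%Z by lia; auto).
      rewrite (IH i Hi D1).
      rewrite (Hc _ D0 D1 D2). f_equal. lia. }
  intros i j Hi Hi1 Hj Hj1.
  destruct (Z.le_gt_cases i j).
  - replace j with (i + Z.of_nat (Z.to_nat (j - i)))%Z by lia.
    apply Hn; auto. replace (i + Z.of_nat (Z.to_nat (j - i)) + 1)%Z with (j+1)%Z by lia. auto.
  - replace i with (j + Z.of_nat (Z.to_nat (i - j)))%Z by lia. symmetry.
    apply Hn; auto. replace (j + Z.of_nat (Z.to_nat (i - j)) + 1)%Z with (i+1)%Z by lia. auto.
Qed.

Lemma ratio_eq a b Xi Xj Xk : Xi <> 0 -> Xj <> 0 -> Xk <> 0 ->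
  (b * Xi + - a * Xk = 0 <-> a / (Xi * Xj) = b / (Xj * Xk)).
Proof.
  intros Hi Hj Hk. split; intro H.
  - replace b with (a * Xk / Xi). field; auto.
    apply (Rmult_eq_reg_r Xi); auto. unfold Rdiv. rewrite Rmult_assoc, Rinv_l; auto. lra.
  - assert (a * Xk = b * Xi).
    { replace (a * Xk) with (a / (Xi * Xj) * (Xi * Xj * Xk)) by (field; auto).
      rewrite H. field; auto. }
    lra.
Qed.

Definition cr (q : V) (f : Z -> V) (i : Z) : R :=
  ip (f i) (f (i+1)%Z) / (ip (f i) q * ip (f (i+1)%Z) q).

Theorem lemma3p12 (p q : V) (dom : Z -> Prop) (f : Z -> V)
  (Hp : ip p p = -1) (Hq : q <> vzero) (Hqp : ip q p = 0)
  (Hcurve : discrete_curve p dom f) (Hreg : regular p q dom f)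
  (HinQ : forall j, dom j -> ip (f j) q <> 0) :
  let cond_i := constant_arclength q dom f in
  let cond_ii :=
    forall i, dom i -> dom (i + 1)%Z -> dom (i + 2)%Z ->
      ip (vadd (vscal (ip (f (i + 2)%Z) (f (i + 1)%Z)) (f i))
               (vscal (- ip (f i) (f (i + 1)%Z)) (f (i + 2)%Z))) q = 0 in
  let cond_iii :=
    exists chi : R, forall i, dom i -> dom (i + 1)%Z ->
      ip (f i) (f (i + 1)%Z) / (ip (f i) q * ip (f (i + 1)%Z) q) = chi in
  let cond_iv :=
    exists a : Z -> V, forall j, dom (j - 1)%Z -> dom j -> dom (j + 1)%Z ->
      (lightlike (a j) /\ a j <> vzero /\
       ip (a j) (f (j - 1)%Z) = 0 /\ ip (a j) (f (j + 1)%Z) = 0) /\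
      (exists al be ga : R, a j = vadd (vscal al (f j)) (vadd (vscal be q) (vscal ga p))) in
  (cond_i <-> cond_ii) /\ (cond_i <-> cond_iii) /\ (cond_i <-> cond_iv).
Proof.
  intros ci cii ciii civ.
  destruct Hcurve as [Hint Hpts].
  destruct Hreg as [_ [Hhyp _]].
  assert (Hbd : forall j, dom j -> dom (j+1)%Z ->
    cr q f j <= 0 /\ (ip q q < 0 -> ip q q * cr q f j <= 2)).
  { intros j Hj Hj1.
    destruct (Hpts j Hj) as [Lj [_ Pj]]. destruct (Hpts _ Hj1) as [Lj1 [_ Pj1]].
    apply (bounds p q); auto. }
  set (PC := forall i, dom i -> dom (i+1)%Z -> dom (i+2)%Z -> cr q f i = cr q f (i+1)%Z).
  assert (Pair : (forall i j, dom i -> dom (i+1)%Z -> dom j -> dom (j+1)%Z -> cr q f i = cr q f j) -> ciii).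
  { intro H. destruct (classic (exists j, dom j /\ dom (j+1)%Z)) as [[j0 [Hj0 Hj01]]|Hno].
    - exists (cr q f j0). intros i Hi Hi1. apply (H i j0); auto.
    - exists 0. intros i Hi Hi1. exfalso. apply Hno. eauto. }
  assert (H3 : ciii <-> PC).
  { split.
    - intros [chi H] i Hi Hi1 Hi2.
      assert (dom (i+1+1)%Z) by (replace (i+1+1)%Z with (i+2)%Z by ring; auto).
      transitivity chi; [apply H | symmetry; apply H]; auto.
    - intro H. apply Pair. apply chain; auto. }
  assert (H2 : cii <-> PC).
  { split.
    - intros H i Hi Hi1 Hi2. specialize (H i Hi Hi1 Hi2).
      rewrite ip_addl, !ip_scall in H. unfold cr.
      replace (i+1+1)%Z with (i+2)%Z by ring.
      rewrite (ip_sym (f (i+2)%Z) (f (i+1)%Z)) in H.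
      apply ratio_eq; auto.
    - intros H i Hi Hi1 Hi2. specialize (H i Hi Hi1 Hi2).
      rewrite ip_addl, !ip_scall.
      unfold cr in H. replace (i+1+1)%Z with (i+2)%Z in H by ring.
      rewrite (ip_sym (f (i+2)%Z) (f (i+1)%Z)).
      apply (ratio_eq _ _ _ (ip (f (i+1)%Z) q)); auto. }
  assert (H1 : ci <-> ciii).
  { split.
    - intros [c0 Hc]. apply Pair. intros i j Hi Hi1 Hj Hj1.
      pose proof (Hc i Hi Hi1) as Ei. pose proof (Hc j Hj Hj1) as Ej.
      rewrite distQ_gK in Ei, Ej.
      destruct (Hbd i Hi Hi1) as [Bi Ci]. destruct (Hbd j Hj Hj1) as [Bj Cj].
      apply (gK_inj (curv q)); auto.
      + unfold curv. intro K. specialize (Ci ltac:(lra)). nra.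
      + unfold curv. intro K. specialize (Cj ltac:(lra)). nra.
      + change (gK (curv q) (qratio q (f i) (f (i+1)%Z)) = gK (curv q) (qratio q (f j) (f (j+1)%Z))).
        congruence.
    - intros [chi H]. exists (gK (curv q) chi). intros j Hj Hj1.
      rewrite distQ_gK. f_equal. apply H; auto. }
  assert (H4 : civ <-> ciii).
  { split.
    - intros [a Ha]. apply H3. intros i Hi Hi1 Hi2.
      assert (Hm : dom (i+1-1)%Z) by (replace (i+1-1)%Z with i by ring; auto).
      assert (Hp2 : dom (i+1+1)%Z) by (replace (i+1+1)%Z with (i+2)%Z by ring; auto).
      destruct (Ha (i+1)%Z Hm Hi1 Hp2) as [[La [Na [O1 O2]]] [al [be [ga E]]]].
      replace (i+1-1)%Z with i in O1 by ring.
      destruct (Hpts i Hi) as [_ [_ Pi]].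
      destruct (Hpts _ Hp2) as [_ [_ Pk]].
      rewrite E in O1, O2, La, Na. norm. unfold lightlike in La.
      normin O1. normin O2. normin La.
      rewrite (ip_sym p (f i)), Pi in O1. rewrite (ip_sym p (f (i+1+1)%Z)), Pk in O2.
      rewrite (ip_sym q (f i)) in O1. rewrite (ip_sym q (f (i+1+1)%Z)) in O2.
      pose proof (HinQ i Hi) as Xi. pose proof (HinQ _ Hi1) as Xj. pose proof (HinQ _ Hp2) as Xk.
      destruct (Req_dec al 0) as [A0|A0].
      + exfalso. subst al.
        assert (be = 0).
        { assert (be * ip (f i) q = 0) by lra. apply Rmult_integral in H. tauto. }
        subst be. destruct (Hpts _ Hi1) as [Lj [_ Pj]].
        rewrite (ip_sym p (f (i+1)%Z)), Pj, (ip_sym p q), Hqp, Hp in La.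
        assert (ga = 0) by nra. subst ga.
        apply Na. unfold vzero, vadd, vscal. simpl. f_equal; ring.
      + unfold cr. rewrite (ip_sym (f i) (f (i+1)%Z)).
        assert (E1 : ip (f (i+1)%Z) (f i) = - be * ip (f i) q / al).
        { apply (Rmult_eq_reg_l al); auto.
          replace (al * (- be * ip (f i) q / al)) with (- be * ip (f i) q) by (field; auto). lra. }
        assert (E2 : ip (f (i+1)%Z) (f (i+1+1)%Z) = - be * ip (f (i+1+1)%Z) q / al).
        { apply (Rmult_eq_reg_l al); auto.
          replace (al * (- be * ip (f (i+1+1)%Z) q / al)) with (- be * ip (f (i+1+1)%Z) q) by (field; auto). lra. }
        rewrite E1, E2.
        field. auto.
    - intros [chi Hchi].
      exists (fun j => vadd (vscal 1 (f j)) (vadd (vscal (- chi * ip (f j) q) q)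
                (vscal (ip (f j) q * sqrt (- chi * (2 - ip q q * chi))) p))).
      intros j Hjm Hj Hjp.
      destruct (Hbd j Hj Hjp) as [B1 B2].
      assert (Cj : cr q f j = chi) by (apply Hchi; auto).
      rewrite Cj in B1, B2.
      assert (S0 : 0 <= - chi * (2 - ip q q * chi)).
      { destruct (Rlt_dec (ip q q) 0) as [Qn|Qn].
        - specialize (B2 Qn). nra.
        - nra. }
      pose proof (sqrt_sqrt _ S0) as S2.
      set (r := sqrt (- chi * (2 - ip q q * chi))) in *.
      destruct (Hpts j Hj) as [Lj [_ Pj]].
      pose proof (HinQ j Hj) as Xj.
      assert (Hqp' : ip p q = 0) by (rewrite ip_sym; auto).
      split; [split; [|split; [|split]]|].
      + unfold lightlike. norm.
        rewrite (ip_sym q (f j)), (ip_sym p (f j)), Pj, Hqp, Hqp', Hp, Lj.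
        transitivity (- (ip (f j) q * ip (f j) q) * (r * r - (- chi * (2 - ip q q * chi)))).
        * ring.
        * rewrite S2. ring.
      + intro Z0.
        assert (E1 : ip (vadd (vscal 1 (f j)) (vadd (vscal (- chi * ip (f j) q) q)
                (vscal (ip (f j) q * r) p))) (f j) = 0) by (rewrite Z0; unfold ip, vzero; simpl; ring).
        assert (E2 : ip (vadd (vscal 1 (f j)) (vadd (vscal (- chi * ip (f j) q) q)
                (vscal (ip (f j) q * r) p))) q = 0) by (rewrite Z0; unfold ip, vzero; simpl; ring).
        normin E1. normin E2.
        rewrite (ip_sym q (f j)), (ip_sym p (f j)), Pj, Lj in E1.
        rewrite ?Hqp, ?Hqp' in E2.
        assert (chi = 0).
        { assert (chi * (ip (f j) q * ip (f j) q) = 0) by lra.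
          apply Rmult_integral in H. destruct H; auto.
          apply Rmult_integral in H. tauto. }
        rewrite H in E2. apply Xj. lra.
      + assert (Hm : dom (j - 1 + 1)%Z) by (replace (j-1+1)%Z with j by ring; auto).
        pose proof (Hchi _ Hjm Hm) as C.
        replace (j-1+1)%Z with j in C by ring.
        pose proof (HinQ _ Hjm) as Xm.
        assert (C' : ip (f (j-1)%Z) (f j) = chi * (ip (f (j-1)%Z) q * ip (f j) q)).
        { rewrite <- C. field. auto. }
        destruct (Hpts _ Hjm) as [_ [_ Pm]].
        norm. rewrite (ip_sym (f j) (f (j-1)%Z)), C', (ip_sym q (f (j-1)%Z)), (ip_sym p (f (j-1)%Z)), Pm.
        ring.
      + pose proof (HinQ _ Hjp) as Xp.
        assert (C' : ip (f j) (f (j+1)%Z) = chi * (ip (f j) q * ip (f (j+1)%Z) q)).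
        { rewrite <- Cj. unfold cr. field. auto. }
        destruct (Hpts _ Hjp) as [_ [_ Pp]].
        norm. rewrite C', (ip_sym q (f (j+1)%Z)), (ip_sym p (f (j+1)%Z)), Pp.
        ring.
      + exists 1, (- chi * ip (f j) q), (ip (f j) q * r). reflexivity. }
  split; [|split]; tauto.
Qed.
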